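(* Let $(G,v_G)$ be a rooted graph and let $g,h\ge 0$, $m\ge 2$ be integers. Let $K_m^{gh}(G,K_1)$ be the graph obtained from the disjoint union of $G$ and a complete graph $K_m$ with two distinct chosen vertices $x,y$ by adding a path of length $g$ joining $v_G$ and $x$ (identifying them if $g=0$) and attaching a pendant path of length $h$ at $y$. Then \[ \frac{X_{K_m^{gh}(G,K_1)}}{(m-2)!}=\sum_{z=1}^{m-1}z\,e_{m-1-z}\,X_{G^{g+h+z}}-(m-2)\sum_{z=1}^{m-1}\frac{X_{K_z^h}}{(z-1)!}\,X_{G^{m-1-z+g}}. \]
   Context: All graphs are finite simple graphs. The chromatic symmetric function of a graph $G$ is $X_G=\sum_{\kappa}\prod_{v\in V(G)}x_{\kappa(v)}$, where $\kappa$ ranges over proper colorings $\kappa:V(G)\to\{1,2,\dots\}$; $e_a$ is the $a$-th elementary symmetric function, $e_0=1$. For a rooted graph $G$ and $k\ge 0$, the tailed graph $G^k$ is $G$ with a pendant path of length $k$ (with $k$ new vertices) attached at its root. $K_z^h$ is the lollipop: the complete graph $K_z$ with a pendant path of length $h$ attached at one vertex. *)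

(* Defs.v *)
From HB Require Import structures.
From mathcomp Require Import all_boot all_order all_algebra.
From mathcomp Require Import mpoly.
Set Implicit Arguments. Unset Strict Implicit. Unset Printing Implicit Defensive.
Import GRing.Theory.
Local Open Scope ring_scope.

Definition proper (V : finType) (e : rel V) (n : nat) (k : {ffun V -> 'I_n}) : bool :=
  [forall u, forall v, e u v ==> (k u != k v)].

(* Truncation of the chromatic symmetric function X_G to n variables
   x_0..x_{n-1}: sum over proper colourings V -> 'I_n of prod_v x_{k v}.
   Two symmetric functions are equal iff all their truncations agree. *)
Definition chrom (V : finType) (e : rel V) (n : nat) : {mpoly rat[n]} :=
  \sum_(k : {ffun V -> 'I_n} | proper e k) \prod_(v : V) 'X_(k v).

(* tailed graph G^k: vertices V + 'I_k, path r - t_0 - t_1 - ... - t_{k-1} *)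
Definition tail_rel (V : finType) (e : rel V) (r : V) (k : nat) : rel (V + 'I_k) :=
  fun a b =>
    match a, b with
    | inl u, inl v => e u v
    | inl u, inr i => (u == r) && (val i == 0)%N
    | inr i, inl u => (u == r) && (val i == 0)%N
    | inr i, inr j => ((val i).+1 == val j) || ((val j).+1 == val i)
    end.

Arguments tail_rel {V} e r k.

Definition complete_rel (z : nat) : rel 'I_z := fun i j => i != j.

(* lollipop K_z^h, meaningful for z >= 1 (vertex type 'I_(z.-1.+1) = 'I_z
   then), pendant path attached at vertex 0 *)
Definition lollipop_rel (z h : nat) : rel ('I_z.-1.+1 + 'I_h) :=
  tail_rel (@complete_rel z.-1.+1) ord0 h.

(* K_m^{gh}(G,K_1), for m >= 2.  Vertex type
     (V + 'I_g) + ('I_(m-1) + 'I_h).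
   V + 'I_g is G^g (tail of length g at r); its endpoint w (r if g = 0,
   else t_{g-1}) plays the role of the vertex x of K_m.  'I_(m-1) are the
   other m-1 vertices of K_m; y is the one with index 0; 'I_h is the
   pendant path y - q_0 - ... - q_{h-1}. *)
Definition tail_end (V : finType) (r : V) (g : nat) (a : V + 'I_g) : bool :=
  match a with
  | inl u => (g == 0)%N && (u == r)
  | inr i => (val i == g.-1)%N
  end.

Definition Kgh_rel0 (V : finType) (e : rel V) (r : V) (g m h : nat)
  : rel ((V + 'I_g) + ('I_m.-1 + 'I_h)) :=
  fun a b =>
    match a, b with
    | inl a', inl b' => tail_rel e r g a' b'
    | inl a', inr (inl _) => @tail_end V r g a'
    | inr (inl i), inr (inl j) => i != j
    | inr (inl j), inr (inr q) => (val j == 0)%N && (val q == 0)%N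
    | inr (inr p), inr (inr q) => ((val p).+1 == val q) || ((val q).+1 == val p)
    | _, _ => false
    end.

Definition Kgh_rel (V : finType) (e : rel V) (r : V) (g m h : nat)
  : rel ((V + 'I_g) + ('I_m.-1 + 'I_h)) :=
  fun a b => @Kgh_rel0 V e r g m h a b || @Kgh_rel0 V e r g m h b a.
Arguments Kgh_rel {V} e r g m h.
Arguments lollipop_rel : clear implicits.

(* Main.v *)
Require Import Defs.
From HB Require Import structures.
From mathcomp Require Import all_boot all_order all_algebra.
From mathcomp Require Import mpoly.
From mathcomp Require Import ring zify.
Import GRing.Theory.
Local Open Scope ring_scope.

Section Eps.
Variable n : nat.
Local Notation R := {mpoly rat[n]}.
Implicit Types (S : {set 'I_n}) (b : 'I_n) (k : nat).

Definition eps (S : {set 'I_n}) (k : nat) : R :=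
  \sum_(h : {set 'I_n} | (h \subset ~: S) && (#|h| == k)) \prod_(i in h) 'X_i.

Lemma eps0 S : eps S 0 = 1.
Proof.
rewrite /eps (bigD1 set0) /=; last by rewrite sub0set cards0.
rewrite big_set0 big1 ?addr0 // => h /andP[/andP[_ /eqP]].
by move/cards0_eq => ->; rewrite eqxx.
Qed.

Lemma mesym_eps k : mesym n rat k = eps set0 k.
Proof.
by apply: eq_bigl => h; rewrite setC0 subsetT.
Qed.

Lemma eps_in S b k : b \notin S ->
  \sum_(h : {set 'I_n} | (h \subset ~: S) && (#|h| == k.+1) && (b \in h))
     \prod_(i in h) 'X_i = 'X_b * eps (b |: S) k.
Proof.
move=> bS; rewrite /eps mulr_sumr.
rewrite (reindex_onto (fun h => b |: h) (fun h => h :\ b)); last first.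
  by move=> h /andP[_ bh]; rewrite setD1K.
apply: eq_big => h.
  apply/idP/idP.
  - move=> /andP[/andP[/andP[sub /eqP c] bh] /eqP e].
    have bnh : b \notin h by rewrite -e !inE eqxx.
    move: c; rewrite cardsU1 bnh add1n => -[->]; rewrite eqxx andbT.
    apply/subsetP => i ih; rewrite !inE negb_or.
    move: (subsetP sub i); rewrite !inE ih orbT => /(_ isT) ->.
    by rewrite andbT; apply: contraNneq bnh => <-.
  - move=> /andP[sub /eqP c].
    have bnh : b \notin h.
      by apply/negP => bh; move: (subsetP sub b bh); rewrite !inE eqxx.
    rewrite cardsU1 bnh c !inE eqxx /= andbT setU1K // eqxx andbT.
    rewrite add1n eqxx andbT; apply/subsetP => i; rewrite !inE => /orP[/eqP -> //|ih].
    by move: (subsetP sub i ih); rewrite !inE negb_or => /andP[].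
move=> /andP[/andP[/andP[sub _] _] /eqP e].
have bnh : b \notin h by rewrite -e !inE eqxx.
by rewrite big_setU1.
Qed.

Lemma eps_S S b k : b \notin S ->
  eps S k.+1 = eps (b |: S) k.+1 + 'X_b * eps (b |: S) k.
Proof.
move=> bS; rewrite -eps_in // [eps S _]/eps (bigID (fun h : {set 'I_n} => b \in h)) /= addrC.
congr (_ + _); apply: eq_bigl => h.
apply/idP/idP.
- move=> /andP[/andP[sub c] bh]; rewrite c andbT.
  apply/subsetP => i ih; rewrite !inE negb_or.
  move: (subsetP sub i ih); rewrite !inE => ->; rewrite andbT.
  by apply: contraNneq bh => <-.
- move=> /andP[sub ->]; rewrite andbT.
  apply/andP; split; last first.
    by apply/negP => bh; move: (subsetP sub b bh); rewrite !inE eqxx.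
  apply/subsetP => i ih; move: (subsetP sub i ih).
  by rewrite !inE negb_or => /andP[].
Qed.

Lemma eps_sum S k :
  \sum_(b | b \notin S) 'X_b * eps (b |: S) k = eps S k.+1 *+ k.+1.
Proof.
under eq_bigr => b bS do rewrite -eps_in //.
rewrite (exchange_big_dep (fun h : {set 'I_n} => (h \subset ~: S) && (#|h| == k.+1))) /=;
  last by move=> b h _ /andP[].
rewrite /eps -sumrMnl; apply: eq_bigr => h /andP[sub /eqP c].
rewrite sumr_const; congr (_ *+ _); rewrite -c.
apply: eq_card => i; rewrite unfold_in /= sub eqxx /=.
case ih: (i \in h); rewrite ?andbF ?andbT //.
by move: (subsetP sub i ih); rewrite !inE.
Qed.
End Eps.
Arguments eps {n}.
Arguments eps0 {n}.
Arguments mesym_eps {n}.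
Arguments eps_in {n}.
Arguments eps_S {n}.
Arguments eps_sum {n}.

Section Ops.
Variable n : nat.
Local Notation R := {mpoly rat[n]}.
Implicit Types (f g : 'I_n -> R) (a b : 'I_n) (k : nat).

Definition Dop f : 'I_n -> R := fun a => \sum_(b | b != a) 'X_b * f b.
Definition Dn k f := iter k Dop f.
Arguments Dn : simpl never.
Definition sc f : R := \sum_b 'X_b * f b.
Definition one : 'I_n -> R := fun _ => 1.
Definition phi f k : R := \sum_b 'X_b * f b * eps [set b] k.
Definition ee k : R := eps set0 k.
Definition alpha k a : R := eps [set a] k.
Definition Xf f : 'I_n -> R := fun a => 'X_a * f a.

Lemma DnS k f a : Dn k.+1 f a = Dop (Dn k f) a.
Proof. by []. Qed.

Lemma XD f a : 'X_a * f a = sc f - Dop f a.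
Proof. by rewrite /sc (bigD1 a) //= addrK. Qed.

Lemma alphaS k a : alpha k.+1 a = ee k.+1 - 'X_a * alpha k a.
Proof.
by rewrite /ee (eps_S set0 a k ltac:(by rewrite in_set0)) setU0 addrK.
Qed.

Lemma alpha0 a : alpha 0 a = 1.
Proof. exact: eps0. Qed.

Lemma ee0 : ee 0 = 1.
Proof. exact: eps0. Qed.

Lemma sc_alpha k : sc (alpha k) = ee k.+1 *+ k.+1.
Proof.
rewrite /ee -eps_sum; apply: eq_big => b; first by rewrite inE.
by rewrite setU0.
Qed.

Lemma eps_pair a b k : b != a ->
  'X_b * eps [set a; b] k = alpha k.+1 a - eps [set a; b] k.+1.
Proof.
move=> ba; rewrite /alpha (eps_S [set a] b k); last by rewrite inE.
by rewrite setUC addrC addKr.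
Qed.

Lemma eps_one b k : 'X_b * eps [set b] k = ee k.+1 - eps [set b] k.+1.
Proof.
by rewrite /ee (eps_S set0 b k ltac:(by rewrite in_set0)) setU0 addrC addKr.
Qed.

Lemma sc_alphaD f M :
  sc (fun a => alpha M a * Dop f a) = ee M.+1 *+ M * sc f + phi f M.+1.
Proof.
have H : forall b, \sum_(a | a != b) 'X_a * alpha M a
                   = ee M.+1 *+ M + eps [set b] M.+1.
  move=> b; have := sc_alpha M; rewrite /sc (bigD1 b) //= => E.
  have -> : \sum_(a | a != b) 'X_a * alpha M a
            = ee M.+1 *+ M.+1 - 'X_b * alpha M b by rewrite -E; ring.
  by rewrite /alpha eps_one mulrS; ring.
rewrite /sc /Dop.
under eq_bigr => a _ do rewrite mulrA mulr_sumr.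
rewrite (exchange_big_dep xpredT) //=.
rewrite /phi mulr_sumr -big_split /=; apply: eq_bigr => j _.
rewrite -mulr_suml (eq_bigl (fun i => i != j)); last by move=> i; rewrite eq_sym.
rewrite H; ring.
Qed.

Definition Q f M a : R :=
  \sum_(i < M.+1) ee (M - i) * Dn i.+1 f a
  - \sum_(i < M) phi f i.+1 * Dn (M.-1 - i) one a
  - sc f * \sum_(i < M) ((M.-1 - i)%:R * ee (M - i) * Dn i one a).

Definition Qs f M : R :=
  \sum_(i < M.+1) ee (M - i) * sc (Dn i.+1 f)
  - \sum_(i < M) phi f i.+1 * sc (Dn (M.-1 - i) one)
  - sc f * \sum_(i < M) ((M.-1 - i)%:R * ee (M - i) * sc (Dn i one)).

Definition DQ f M a : R :=
  \sum_(i < M.+1) ee (M - i) * Dn i.+2 f a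
  - \sum_(i < M) phi f i.+1 * Dn (M.-1 - i).+1 one a
  - sc f * \sum_(i < M) ((M.-1 - i)%:R * ee (M - i) * Dn i.+1 one a).

Lemma XDn1 c j g a : 'X_a * (c * Dn j g a) = c * sc (Dn j g) - c * Dn j.+1 g a.
Proof. by rewrite mulrCA XD mulrBr. Qed.

Lemma XDn2 c d j g a :
  'X_a * (c * (d * Dn j g a)) = c * (d * sc (Dn j g)) - c * (d * Dn j.+1 g a).
Proof. by rewrite mulrCA XDn1 mulrBr. Qed.

Lemma XQ f M a : 'X_a * Q f M a = Qs f M - DQ f M a.
Proof.
rewrite /Q /Qs /DQ !mulrBr !mulr_sumr.
under eq_bigr do rewrite XDn1.
under [X in _ - X - _]eq_bigr do rewrite XDn1.
under [X in _ - _ - X]eq_bigr do rewrite XDn2.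
rewrite !sumrB; ring.
Qed.

Lemma sc_Q f M : sc (Q f M) = Qs f M.
Proof.
rewrite /Q /Qs {1}/sc.
under eq_bigr do rewrite !mulrBr.
rewrite !sumrB; congr (_ - _ - _).
- under eq_bigr do rewrite mulr_sumr.
  rewrite exchange_big; apply: eq_bigr => i _; rewrite /sc [RHS]mulr_sumr.
  by apply: eq_bigr => b _; ring.
- under eq_bigr do rewrite mulr_sumr.
  rewrite exchange_big; apply: eq_bigr => i _; rewrite /sc [RHS]mulr_sumr.
  by apply: eq_bigr => b _; ring.
- under eq_bigr do rewrite mulrCA mulr_sumr.
  rewrite -mulr_sumr; congr (_ * _).
  rewrite exchange_big; apply: eq_bigr => i _; rewrite /sc [RHS]mulr_sumr.
  by apply: eq_bigr => b _; ring.
Qed.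

Lemma star f M a : alpha M a * Dop f a = Q f M a.
Proof.
elim: M a => [|M IH] a.
  rewrite alpha0 mul1r /Q !big_ord0 big_ord1 subnn ee0 mul1r mulr0.
  by rewrite !subr0.
have HQs : Qs f M = ee M.+1 *+ M * sc f + phi f M.+1.
  rewrite -sc_Q -sc_alphaD; apply: eq_bigr => b _; by rewrite IH.
rewrite alphaS mulrBl -mulrA IH XQ HQs.
have E1 : \sum_(i < M.+2) ee (M.+1 - i) * Dn i.+1 f a
   = ee M.+1 * Dn 1 f a + \sum_(i < M.+1) ee (M - i) * Dn i.+2 f a.
  by rewrite big_ord_recl subn0.
have E2 : \sum_(i < M.+1) phi f i.+1 * Dn (M.+1.-1 - i) one a
   = \sum_(i < M) phi f i.+1 * Dn (M.-1 - i).+1 one a + phi f M.+1.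
  rewrite big_ord_recr subnn mulr1; congr (_ + _).
  apply: eq_bigr => i _ /=.
  have -> : (M - i = (M.-1 - i).+1)%N by have := ltn_ord i; lia.
  by [].
have E3 : \sum_(i < M.+1) (M.+1.-1 - i)%:R * ee (M.+1 - i) * Dn i one a
   = M%:R * ee M.+1 + \sum_(i < M) (M.-1 - i)%:R * ee (M - i) * Dn i.+1 one a.
  rewrite big_ord_recl subn0 mulr1; congr (_ + _).
  apply: eq_bigr => i _; rewrite lift0.
  have -> : (M.+1.-1 - i.+1 = M.-1 - i)%N by lia.
  by [].
rewrite /Q E1 E2 E3 /DQ -[Dop f a]/(Dn 1 f a).
rewrite mulr_natl; ring.
Qed.

End Ops.
Arguments Dop {n}. Arguments Dn {n}. Arguments sc {n}. Arguments one {n}.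
Arguments phi {n}. Arguments ee {n}. Arguments alpha {n}. Arguments Xf {n}.
Arguments Q {n}. Arguments Qs {n}. Arguments DQ {n}.
Arguments star {n}. Arguments XD {n}. Arguments alphaS {n}.
Arguments eps_one {n}. Arguments eps_pair {n}. Arguments DnS {n}. Arguments alpha0 {n}. Arguments ee0 {n}.

Section Core.
Variable n : nat.
Local Notation R := {mpoly rat[n]}.
Implicit Types (f g : 'I_n -> R) (a b : 'I_n) (k : nat).

Definition Fk f k a : R := \sum_(b | b != a) 'X_b * f b * eps [set a; b] k.
Definition Gk f k a : R :=
  \sum_(i < k.+1) (i.+1)%:R * ee (k - i) * Dn i.+1 f a
  - k%:R * \sum_(i < k.+1) phi f i * Dn (k - i) one a.

Lemma Dn_Xf f z a : Dn z (Xf f) a = sc f * Dn z one a - Dn z.+1 f a.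
Proof.
elim: z a => [|z IH] a; first by rewrite /Dn /= /Xf XD mulr1.
rewrite DnS /Dop.
under eq_bigr => b _ do rewrite IH mulrBr mulrCA.
rewrite sumrB -mulr_sumr.
by [].
Qed.

Lemma phi_Xf f i : phi (Xf f) i = ee i.+1 * sc f - phi f i.+1.
Proof.
rewrite /phi /sc /Xf mulr_sumr -sumrB; apply: eq_bigr => b _.
have := eps_one b i; rewrite -/(ee i.+1) => E.
transitivity ('X_b * f b * ('X_b * eps [set b] i)); first by ring.
rewrite E; ring.
Qed.

Lemma phi0 f : phi f 0 = sc f.
Proof. by rewrite /phi; apply: eq_bigr => b _; rewrite eps0 mulr1. Qed.

Lemma F_rec f k a : Fk f k.+1 a = alpha k.+1 a * Dop f a - Fk (Xf f) k a.
Proof.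
rewrite /Fk /Dop mulr_sumr -sumrB; apply: eq_bigr => b ba.
rewrite /Xf.
transitivity ('X_b * f b * alpha k.+1 a - 'X_b * f b * ('X_b * eps [set a; b] k)).
  by rewrite eps_pair //; ring.
ring.
Qed.

Lemma G_step f k a : Gk f k.+1 a + Gk (Xf f) k a = Q f k.+1 a.
Proof.
set S1 := \sum_(i < k.+1) ee (k - i) * Dn i.+2 f a.
set T1 := \sum_(i < k.+1) (i.+1)%:R * ee (k - i) * Dn i.+2 f a.
set P := \sum_(i < k.+1) phi f i.+1 * Dn (k - i) one a.
set W := \sum_(i < k) (i.+1)%:R * ee (k - i) * Dn i.+1 one a.
set U2 := \sum_(i < k.+1) ee (k.+1 - i) * Dn i one a.
set U3 := \sum_(i < k.+1) (k - i)%:R * ee (k.+1 - i) * Dn i one a.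
have HGX : Gk (Xf f) k a = sc f * (W + k.+1%:R * Dn k.+1 one a) - T1
                            - k%:R * (sc f * U2 - P).
  rewrite /Gk.
  have -> : \sum_(i < k.+1) (i.+1)%:R * ee (k - i) * Dn i.+1 (Xf f) a
     = sc f * \sum_(i < k.+1) (i.+1)%:R * ee (k - i) * Dn i.+1 one a - T1.
    rewrite /T1 mulr_sumr -sumrB; apply: eq_bigr => i _; rewrite Dn_Xf; ring.
  have -> : \sum_(i < k.+1) phi (Xf f) i * Dn (k - i) one a
     = sc f * \sum_(i < k.+1) ee i.+1 * Dn (k - i) one a - P.
    rewrite /P mulr_sumr -sumrB; apply: eq_bigr => i _; rewrite phi_Xf; ring.
  rewrite big_ord_recr /= subnn ee0 -/W.
  have -> : \sum_(i < k.+1) ee i.+1 * Dn (k - i) one a = U2.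
    rewrite /U2 (reindex_inj rev_ord_inj) /=; apply: eq_bigr => i _.
    by congr (ee _ * Dn _ _ _); have := ltn_ord i; lia.
  ring.
have HG : Gk f k.+1 a = ee k.+1 * Dn 1 f a + T1 + S1
                        - k.+1%:R * (sc f * Dn k.+1 one a + P).
  rewrite /Gk big_ord_recl [X in _ - _ * X]big_ord_recl phi0 subn0.
  have -> : \sum_(i < k.+1) (bump 0 i).+1%:R * ee (k.+1 - bump 0 i) * Dn (bump 0 i).+1 f a
           = T1 + S1.
    rewrite /T1 /S1 -big_split; apply: eq_bigr => i _ /=.
    rewrite /bump /= add1n subSS -addn1 natrD; ring.
  have -> : \sum_(i < k.+1) phi f (bump 0 i) * Dn (k.+1 - bump 0 i) one a = P.
    by apply: eq_bigr => i _; rewrite /bump /= add1n subSS.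
  rewrite /=; ring.
have HQ : Q f k.+1 a = ee k.+1 * Dn 1 f a + S1 - P - sc f * U3.
  rewrite /Q big_ord_recl subn0; congr (_ + _ - _ - _).
have HU3 : U3 = k%:R * U2 - W.
  rewrite /U3 /U2 /W mulr_sumr.
  rewrite [X in _ = _ - X](_ : _ = \sum_(i < k.+1) i%:R * ee (k.+1 - i) * Dn i one a);
    last by rewrite big_ord_recl mul0r mul0r add0r; apply: eq_bigr => i _; rewrite lift0.
  rewrite -sumrB; apply: eq_bigr => i _.
  have -> : ((k - i)%:R = k%:R - i%:R :> R).
    by rewrite natrB //; have := ltn_ord i; lia.
  ring.
rewrite HGX HG HQ HU3; ring.
Qed.

Lemma core k : forall f a, Fk f k a = Gk f k a.
Proof.
elim: k => [|k IH] f a.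
  rewrite /Fk /Gk big_ord1 mul0r subr0 /= ee0 !mul1r.
  by apply: eq_bigr => b _; rewrite eps0 mulr1.
rewrite F_rec IH star.
rewrite -(G_step f k a); ring.
Qed.
End Core.
Arguments Fk {n}. Arguments Gk {n}. Arguments core {n}.

Definition fjoin (A B T : finType) (k1 : {ffun A -> T}) (k2 : {ffun B -> T})
  : {ffun A + B -> T} :=
  [ffun x => match x with inl a => k1 a | inr b => k2 b end].

Definition fcons (T : finType) k (x : T) (t : {ffun 'I_k -> T}) : {ffun 'I_k.+1 -> T} :=
  [ffun i => if unlift ord0 i is Some j then t j else x].

Arguments fjoin {A B T}.
Arguments fcons {T k}.

Section Split.
Variable R : nmodType.

Lemma sum_fjoin (A B T : finType) (F : {ffun A + B -> T} -> R) :
  \sum_k F k = \sum_(k1 : {ffun A -> T}) \sum_(k2 : {ffun B -> T}) F (fjoin k1 k2).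
Proof.
rewrite pair_big /=.
rewrite (reindex (fun p : {ffun A -> T} * {ffun B -> T} => fjoin p.1 p.2)) //.
exists (fun k : {ffun A + B -> T} => ([ffun a => k (inl a)] : {ffun A -> T}, [ffun b => k (inr b)] : {ffun B -> T})) => [[k1 k2] _|k _].
  by congr (_, _); apply/ffunP => x; rewrite !ffunE.
by apply/ffunP => -[a|b]; rewrite !ffunE.
Qed.

Lemma sum_fcons (T : finType) k (F : {ffun 'I_k.+1 -> T} -> R) :
  \sum_t F t = \sum_(x : T) \sum_(t : {ffun 'I_k -> T}) F (fcons x t).
Proof.
rewrite pair_big /=.
rewrite (reindex (fun p : T * {ffun 'I_k -> T} => fcons p.1 p.2)) //.
exists (fun t : {ffun 'I_k.+1 -> T} => (t ord0, [ffun j => t (lift ord0 j)] : {ffun 'I_k -> T})) => [[x t] _|t _].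
  by congr (_, _); [rewrite ffunE unlift_none | apply/ffunP => j; rewrite !ffunE liftK].
apply/ffunP => i; rewrite !ffunE.
case: unliftP => [j ->|->] //=; by rewrite ffunE.
Qed.
End Split.

Lemma fcons0 (T : finType) k (x : T) t : fcons x t (@ord0 k) = x.
Proof. by rewrite ffunE unlift_none. Qed.

Lemma fconsS (T : finType) k (x : T) t (j : 'I_k) : fcons x t (lift ord0 j) = t j.
Proof. by rewrite ffunE liftK. Qed.

Lemma vlift0 k (i : 'I_k) : val (lift ord0 i) = i.+1.
Proof. by []. Qed.

Set Implicit Arguments.
Unset Strict Implicit.
Section Comb.
Variable n : nat.
Local Notation R := {mpoly rat[n]}.

Definition wt (A : finType) (k : {ffun A -> 'I_n}) : R := \prod_v 'X_(k v).

Arguments wt {A}.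
Lemma wt_fjoin (A B : finType) (k1 : {ffun A -> 'I_n}) (k2 : {ffun B -> 'I_n}) :
  wt (fjoin k1 k2) = wt k1 * wt k2.
Proof. by rewrite /wt big_sumType; congr (_ * _); apply: eq_bigr => v _; rewrite ffunE. Qed.

Lemma wt_fcons k (x : 'I_n) (t : {ffun 'I_k -> 'I_n}) : wt (fcons x t) = 'X_x * wt t.
Proof.
rewrite /wt big_ord_recl fcons0; congr (_ * _); apply: eq_bigr => j _.
by rewrite fconsS.
Qed.

Lemma chromE (V : finType) (e : rel V) :
  chrom e n = \sum_(k | Defs.proper e k) wt k.
Proof. by []. Qed.

Lemma properP (T : finType) (E : rel T) (k : {ffun T -> 'I_n}) :
  reflect (forall u v, E u v -> k u != k v) (Defs.proper E k).
Proof.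
apply: (iffP forallP) => [H u v Euv|H u].
  by have /forallP/(_ v)/implyP := H u; apply.
by apply/forallP => v; apply/implyP; apply: H.
Qed.

Lemma proper_fjoin (A B : finType) (E : rel (A + B)) (k1 : {ffun A -> 'I_n})
    (k2 : {ffun B -> 'I_n}) :
  Defs.proper E (fjoin k1 k2) = [&& Defs.proper (fun x y => E (inl x) (inl y)) k1,
      Defs.proper (fun x y => E (inr x) (inr y)) k2 &
      [forall a, forall b, (E (inl a) (inr b) || E (inr b) (inl a)) ==> (k1 a != k2 b)]].
Proof.
apply/idP/idP.
  move/properP => H; apply/and3P; split.
  - by apply/properP => x y /H; rewrite !ffunE.
  - by apply/properP => x y /H; rewrite !ffunE.
  - apply/forallP => a; apply/forallP => b; apply/implyP => /orP[/H|/H];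
      by rewrite !ffunE // eq_sym.
case/and3P => /properP H1 /properP H2 /forallP H3.
apply/properP => -[x|x] [y|y]; rewrite !ffunE => Exy.
- exact: H1.
- by have /forallP/(_ y)/implyP := H3 x; apply; rewrite Exy.
- by rewrite eq_sym; have /forallP/(_ x)/implyP := H3 y; apply; rewrite Exy orbT.
- exact: H2.
Qed.

Lemma proper_symc (T : finType) (P : rel T) (k : {ffun T -> 'I_n}) :
  Defs.proper (fun x y => P x y || P y x) k = Defs.proper P k.
Proof.
apply/properP/properP => H u v Puv; first by apply: H; rewrite Puv.
by case/orP: Puv => /H //; rewrite eq_sym.
Qed.

Definition pathOK k (c : 'I_n) (t : {ffun 'I_k -> 'I_n}) : bool :=
  [forall i, forall j, ((val i).+1 == val j) ==> (t i != t j)]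
  && [forall i, (val i == 0)%N ==> (t i != c)].

Arguments pathOK {k}.
Lemma pathOK_fcons k (c d : 'I_n) (t : {ffun 'I_k -> 'I_n}) :
  pathOK c (fcons d t) = (d != c) && pathOK d t.
Proof.
apply/idP/idP.
  case/andP => /forallP H1 /forallP H2.
  apply/andP; split; first by have /implyP := H2 ord0; rewrite fcons0; apply.
  apply/andP; split.
    apply/forallP => i; apply/forallP => j; apply/implyP => ij.
    have /forallP/(_ (lift ord0 j))/implyP := H1 (lift ord0 i).
    by rewrite !fconsS; apply; rewrite !vlift0.
  apply/forallP => i; apply/implyP => i0.
  have /forallP/(_ (lift ord0 i))/implyP := H1 ord0.
  rewrite fcons0 fconsS vlift0 /= eqSS => H; rewrite eq_sym; apply: H; by rewrite eq_sym.
case/andP => dc /andP[/forallP H1 /forallP H2]; apply/andP; split.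
  apply/forallP => i; apply/forallP => j; apply/implyP.
  case: (unliftP ord0 i) => [i' ->|->]; case: (unliftP ord0 j) => [j' ->|->] //.
  - rewrite !vlift0 !fconsS eqSS => ij.
    by have /forallP/(_ j')/implyP := H1 i'; apply.
  - rewrite vlift0 fcons0 fconsS eqSS eq_sym => j0.
    by rewrite eq_sym; have /implyP := H2 j'; apply.
apply/forallP => i; apply/implyP.
case: (unliftP ord0 i) => [i' ->|->]; first by rewrite vlift0.
by rewrite fcons0.
Qed.

Definition cliqueOK k (S : {set 'I_n}) (c : {ffun 'I_k -> 'I_n}) : bool :=
  [forall u, forall v, (u != v) ==> (c u != c v)] && [forall i, c i \notin S].

Arguments cliqueOK {k}.
Lemma cliqueOK_fcons k (S : {set 'I_n}) (b : 'I_n) (c : {ffun 'I_k -> 'I_n}) :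
  cliqueOK S (fcons b c) = (b \notin S) && cliqueOK (b |: S) c.
Proof.
apply/idP/idP.
  case/andP => /forallP H1 /forallP H2.
  apply/andP; split; first by have := H2 ord0; rewrite fcons0.
  apply/andP; split.
    apply/forallP => u; apply/forallP => v; apply/implyP => uv.
    have /forallP/(_ (lift ord0 v))/implyP := H1 (lift ord0 u).
    by rewrite !fconsS; apply; rewrite (inj_eq (@lift_inj _ ord0)).
  apply/forallP => i; rewrite !inE negb_or; apply/andP; split; last first.
    by have := H2 (lift ord0 i); rewrite fconsS.
  have /forallP/(_ (lift ord0 i))/implyP := H1 ord0.
  rewrite fcons0 fconsS => H; rewrite eq_sym; apply: H; exact: neq_lift.
case/andP => bS /andP[/forallP H1 /forallP H2]; apply/andP; split.
  apply/forallP => u; apply/forallP => v; apply/implyP.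
  case: (unliftP ord0 u) => [u' ->|->]; case: (unliftP ord0 v) => [v' ->|->].
  - rewrite (inj_eq (@lift_inj _ ord0)) !fconsS => uv.
    by have /forallP/(_ v')/implyP := H1 u'; apply.
  - rewrite fcons0 fconsS => _; have := H2 u'; rewrite !inE negb_or.
    by case/andP.
  - rewrite fcons0 fconsS => _; have := H2 v'; rewrite !inE negb_or.
    by case/andP; rewrite eq_sym.
  - by rewrite eqxx.
apply/forallP => i.
case: (unliftP ord0 i) => [i' ->|->]; last by rewrite fcons0.
rewrite fconsS; have := H2 i'; rewrite !inE negb_or.
by case/andP.
Qed.
Definition endc k (c : 'I_n) : {ffun 'I_k -> 'I_n} -> 'I_n :=
  match k with 0 => fun _ => c | k'.+1 => fun t => t ord_max end.

Arguments endc {k}.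
Lemma endc_fcons k (c d : 'I_n) (t : {ffun 'I_k -> 'I_n}) :
  endc c (fcons d t) = endc d t.
Proof.
case: k t => [|k] t /=.
  have -> : (ord_max : 'I_1) = ord0 by apply/val_inj.
  by rewrite fcons0.
have -> : (ord_max : 'I_k.+2) = lift ord0 (ord_max : 'I_k.+1) by apply/val_inj.
by rewrite fconsS.
Qed.

Lemma ffun_I0 (T : finType) (t t' : {ffun 'I_0 -> T}) : t = t'.
Proof. by apply/ffunP => -[i hi]; have := hi; rewrite ltn0. Qed.

Lemma sum_I0 (T : finType) (t0 : {ffun 'I_0 -> T}) (G : {ffun 'I_0 -> T} -> R) :
  \sum_t G t = G t0.
Proof. by rewrite (big_pred1 t0) // => t; rewrite /= (ffun_I0 t t0) eqxx. Qed.

Lemma wt_I0 (t : {ffun 'I_0 -> 'I_n}) : wt t = 1.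
Proof. by rewrite /wt big_ord0. Qed.

Lemma path_sum k : forall (ph : 'I_n -> R) c,
  \sum_(t : {ffun 'I_k -> 'I_n} | pathOK c t) wt t * ph (endc c t) = Dn k ph c.
Proof.
elim: k => [|k IH] ph c.
  rewrite big_mkcond (sum_I0 [ffun i => c]) /= wt_I0 mul1r.
  have -> : pathOK c ([ffun i => c] : {ffun 'I_0 -> 'I_n}).
    by apply/andP; split; apply/forallP => -[i hi]; have := hi; rewrite ltn0.
  by [].
rewrite big_mkcond sum_fcons DnS /Dop [RHS]big_mkcond; apply: eq_bigr => d _.
under eq_bigr do rewrite pathOK_fcons wt_fcons endc_fcons.
case: (d != c); last by rewrite big1.
rewrite -IH mulr_sumr [RHS]big_mkcond; apply: eq_bigr => t _.
by case: (pathOK d t) => //; rewrite mulrA.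
Qed.

Lemma clique_sum0 k (S : {set 'I_n}) (ps : 'I_n -> R) :
  (forall S', \sum_(c : {ffun 'I_k -> 'I_n} | cliqueOK S' c) wt c = eps S' k *+ k`!) ->
  \sum_(c : {ffun 'I_k.+1 -> 'I_n} | cliqueOK S c) wt c * ps (c ord0)
   = \sum_(b | b \notin S) 'X_b * ps b * (eps (b |: S) k *+ k`!).
Proof.
move=> IH.
rewrite big_mkcond sum_fcons [RHS]big_mkcond; apply: eq_bigr => b _.
under eq_bigr do rewrite cliqueOK_fcons wt_fcons fcons0.
case: (b \notin S); last by rewrite big1.
rewrite -IH mulr_sumr [RHS]big_mkcond; apply: eq_bigr => c _.
by case: (cliqueOK (b |: S) c) => //; ring.
Qed.

Lemma clique_sum k : forall (S : {set 'I_n}),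
  \sum_(c : {ffun 'I_k -> 'I_n} | cliqueOK S c) wt c = eps S k *+ k`!.
Proof.
elim: k => [|k IH] S.
  rewrite big_mkcond (sum_I0 (ffun0 (card_ord 0))) /= wt_I0 eps0.
  have -> : cliqueOK S (ffun0 (card_ord 0) : {ffun 'I_0 -> 'I_n}).
    apply/andP; split; apply/forallP => -[i hi]; have := hi; rewrite ltn0; by [].
  by [].
have := @clique_sum0 k S (fun _ => 1) IH.
under eq_bigr do rewrite mulr1.
move=> ->.
under eq_bigr do rewrite mulr1 mulrnAr.
by rewrite sumrMnl eps_sum -mulrnA factS mulnC.
Qed.
End Comb.

Set Implicit Arguments.
Unset Strict Implicit.
Section Graphs.
Variable n : nat.
Local Notation R := {mpoly rat[n]}.

Lemma proper_tail (V : finType) (e : rel V) (r : V) k (κ : {ffun V -> 'I_n})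
  (t : {ffun 'I_k -> 'I_n}) :
  Defs.proper (tail_rel e r k) (fjoin κ t) = Defs.proper e κ && pathOK (κ r) t.
Proof.
rewrite proper_fjoin /pathOK.
have -> : Defs.proper (fun x y => tail_rel e r k (inr x) (inr y)) t
   = Defs.proper (fun i j : 'I_k => (val i).+1 == val j) t.
  by rewrite -[RHS]proper_symc.
congr [&& _, _ & _].
apply/idP/idP.
  move/forallP/(_ r)/forallP => H; apply/forallP => i; apply/implyP => i0.
  by have /implyP := H i; rewrite /= eqxx i0 /= => /(_ isT); rewrite eq_sym.
move/forallP => H; apply/forallP => a; apply/forallP => b; apply/implyP => /=.
rewrite orbb => /andP[/eqP -> b0]; have /implyP H1 := H b; rewrite eq_sym; exact: H1 b0.
Qed.

Lemma chrom_tail (V : finType) (e : rel V) (r : V) k :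
  chrom (tail_rel e r k) n = \sum_(κ | Defs.proper e κ) wt κ * Dn k one (κ r).
Proof.
rewrite chromE big_mkcond sum_fjoin [RHS]big_mkcond; apply: eq_bigr => κ _.
under eq_bigr do rewrite proper_tail wt_fjoin.
case: (Defs.proper e κ); last by rewrite big1.
rewrite -path_sum mulr_sumr [RHS]big_mkcond; apply: eq_bigr => t _.
by case: (pathOK _ t) => //; rewrite /one mulr1.
Qed.

Lemma tail_end_col (V : finType) (r : V) g (κ : {ffun V -> 'I_n})
  (t : {ffun 'I_g -> 'I_n}) a' : tail_end r a' -> fjoin κ t a' = endc (κ r) t.
Proof.
case: g t a' => [|g] t [u|i] /=.
- by move/eqP ->; rewrite ffunE.
- by move: i => -[i hi]; have := hi; rewrite ltn0.
- by [].
- move/eqP => hi; rewrite ffunE; congr (t _); exact/val_inj.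
Qed.

Lemma tail_end_ex (V : finType) (r : V) g (κ : {ffun V -> 'I_n})
  (t : {ffun 'I_g -> 'I_n}) : exists a', tail_end r a' && (fjoin κ t a' == endc (κ r) t).
Proof.
case: g t => [|g] t.
  by exists (inl r); rewrite ffunE /= !eqxx.
by exists (inr ord_max); rewrite ffunE /= !eqxx.
Qed.

Lemma proper_Kgh (V : finType) (e : rel V) (r : V) g k h (κ : {ffun V -> 'I_n})
  (t : {ffun 'I_g -> 'I_n}) (c : {ffun 'I_k.+1 -> 'I_n}) (q : {ffun 'I_h -> 'I_n}) :
  Defs.proper (Kgh_rel e r g k.+2 h) (fjoin (fjoin κ t) (fjoin c q))
  = [&& Defs.proper e κ, pathOK (κ r) t, cliqueOK [set endc (κ r) t] c
        & pathOK (c ord0) q].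
Proof.
rewrite proper_fjoin.
have -> : Defs.proper (fun x y => Kgh_rel e r g k.+2 h (inl x) (inl y)) (fjoin κ t)
   = Defs.proper (tail_rel e r g) (fjoin κ t) by rewrite -[RHS]proper_symc.
rewrite proper_tail proper_fjoin.
have -> : Defs.proper (fun x y => Kgh_rel e r g k.+2 h (inr (inl x)) (inr (inl y))) c
   = Defs.proper (fun i j : 'I_k.+1 => i != j) c by rewrite -[RHS]proper_symc.
have -> : Defs.proper (fun x y => Kgh_rel e r g k.+2 h (inr (inr x)) (inr (inr y))) q
   = Defs.proper (fun i j : 'I_h => (val i).+1 == val j) q
  by rewrite -[RHS]proper_symc -[RHS]proper_symc.
set X2 := [forall a, forall b, _ ==> _].
have -> : X2 = [forall i, (val i == 0)%N ==> (q i != c ord0)].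
  rewrite /X2; apply/idP/idP.
    move/forallP/(_ ord0)/forallP => H; apply/forallP => p; apply/implyP => p0.
    have /implyP H1 := H p; rewrite eq_sym; apply: H1.
    by rewrite /Kgh_rel /= p0.
  move/forallP => H; apply/forallP => j; apply/forallP => p; apply/implyP.
  rewrite /Kgh_rel /= !orbF orbb => /andP[j0 p0].
  have -> : j = ord0 by apply/val_inj/eqP.
  have /implyP H1 := H p; rewrite eq_sym; exact: H1.
set X1 := [forall a, forall b, _ ==> _].
have -> : X1 = [forall j, c j \notin [set endc (κ r) t]].
  rewrite /X1; apply/idP/idP.
    move=> H; apply/forallP => j; rewrite inE.
    have [a' /andP[ta /eqP <-]] := tail_end_ex r κ t.
    have /forallP/(_ (inl j))/implyP := (forallP H) a'.
    rewrite !ffunE eq_sym; apply.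
    by rewrite /Kgh_rel /= ta.
  move/forallP => H; apply/forallP => a'; apply/forallP => -[j|p]; apply/implyP;
    rewrite /Kgh_rel /= ?orbF //.
  rewrite orbb => ta; rewrite (tail_end_col κ t ta) !ffunE.
  by have := H j; rewrite inE eq_sym.
rewrite /pathOK /cliqueOK.
apply/idP/idP.
  case/and3P => /and3P[H1 H2 H3] /and3P[H4 H5 H6] H7.
  by apply/and4P; split => //; apply/andP; split.
case/and4P => H1 /andP[H2 H3] /andP[H4 H7] /andP[H5 H6].
by apply/and3P; split => //; apply/and3P; split.
Qed.

Lemma Phi_eq h k (w : 'I_n) :
  Fk (Dn h one) k w *+ k`! = \sum_(c : {ffun 'I_k.+1 -> 'I_n} | cliqueOK [set w] c)
                                \sum_(q : {ffun 'I_h -> 'I_n} | pathOK (c ord0) q) wt c * wt q.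
Proof.
have H : forall c : {ffun 'I_k.+1 -> 'I_n},
    \sum_(q : {ffun 'I_h -> 'I_n} | pathOK (c ord0) q) wt c * wt q = wt c * Dn h one (c ord0).
  move=> c; rewrite -mulr_sumr -path_sum; congr (_ * _); apply: eq_bigr => q _.
  by rewrite /one mulr1.
under [RHS]eq_bigr => c _ do rewrite H.
rewrite (clique_sum0 _ _ (@clique_sum _ k)) /Fk -sumrMnl.
apply: eq_big => b; first by rewrite inE.
by move=> _; rewrite mulrnAr setUC.
Qed.

Lemma chrom_Kgh (V : finType) (e : rel V) (r : V) g k h :
  chrom (Kgh_rel e r g k.+2 h) n =
  \sum_(κ | Defs.proper e κ) wt κ * Dn g (fun a => Fk (Dn h one) k a *+ k`!) (κ r).
Proof.
rewrite chromE big_mkcond sum_fjoin sum_fjoin [RHS]big_mkcond; apply: eq_bigr => κ _.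
under eq_bigr => t _ do rewrite sum_fjoin.
under eq_bigr => t _ do under eq_bigr => c _ do under eq_bigr => q _ do
  rewrite proper_Kgh !wt_fjoin.
case: (Defs.proper e κ); last first.
  rewrite big1 // => t _; rewrite big1 // => c _; rewrite big1 //.
rewrite -path_sum mulr_sumr [RHS]big_mkcond; apply: eq_bigr => t _ /=.
case: (pathOK (κ r) t); last first.
  rewrite big1 // => c _; rewrite big1 //.
rewrite Phi_eq !mulr_sumr [RHS]big_mkcond; apply: eq_bigr => c _ /=.
case: (cliqueOK _ c); last by rewrite big1.
rewrite !mulr_sumr [RHS]big_mkcond; apply: eq_bigr => q _ /=.
by case: (pathOK _ q) => //; ring.
Qed.

Lemma chrom_lollipop k h :
  chrom (lollipop_rel k.+1 h) n = phi (Dn h one) k *+ k`!.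
Proof.
rewrite /lollipop_rel chrom_tail.
have -> : \sum_(c | Defs.proper (@complete_rel k.+1) c) wt c * Dn h one (c ord0)
   = \sum_(c : {ffun 'I_k.+1 -> 'I_n} | cliqueOK set0 c) wt c * Dn h one (c ord0).
  apply: eq_bigl => c; rewrite /cliqueOK.
  have -> : [forall i, c i \notin set0] by apply/forallP => i; rewrite inE.
  by rewrite andbT.
rewrite (clique_sum0 _ _ (@clique_sum _ k)) /phi -sumrMnl.
apply: eq_big => b; first by rewrite inE.
by move=> _; rewrite mulrnAr setU0.
Qed.
End Graphs.

Section Final.
Variable n : nat.
Local Notation R := {mpoly rat[n]}.

Lemma Dn_mulrn g (u : 'I_n -> R) N : forall c,
  Dn g (fun a => u a *+ N) c = Dn g u c *+ N.
Proof.
elim: g => [|g IH] c; first by [].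
rewrite !DnS /Dop -sumrMnl; apply: eq_bigr => b _; by rewrite IH mulrnAr.
Qed.

Lemma Dn_lin g (w : 'I_n -> R) K1 (c1 : 'I_K1 -> R) (u1 : 'I_K1 -> 'I_n -> R)
  (d : R) K2 (c2 : 'I_K2 -> R) (u2 : 'I_K2 -> 'I_n -> R) :
  (forall a, w a = \sum_i c1 i * u1 i a - d * \sum_j c2 j * u2 j a) ->
  forall c, Dn g w c = \sum_i c1 i * Dn g (u1 i) c - d * \sum_j c2 j * Dn g (u2 j) c.
Proof.
move=> Hw; elim: g => [|g IH] c; first exact: Hw.
rewrite !DnS {1}/Dop.
under eq_bigr => b _ do rewrite IH mulrBr !mulr_sumr.
rewrite sumrB; congr (_ - _).
  rewrite exchange_big; apply: eq_bigr => i _.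
  by rewrite DnS /Dop mulr_sumr; apply: eq_bigr => b _; ring.
rewrite exchange_big mulr_sumr; apply: eq_bigr => j _.
by rewrite DnS /Dop !mulr_sumr; apply: eq_bigr => b _; ring.
Qed.

Lemma DnD i j (f : 'I_n -> R) c : Dn i (Dn j f) c = Dn (i + j) f c.
Proof. by rewrite /Dn iterD. Qed.
End Final.

Lemma inv_fact_scale n' N (p : {mpoly rat[n']}) :
  ((N`!%:R : rat)^-1) *: (p *+ N`!) = p.
Proof.
rewrite -scalerMnr scalerMnl -mulr_natr mulVf ?scale1r //.
by rewrite Num.Theory.pnatr_eq0 -lt0n fact_gt0.
Qed.


Unset Implicit Arguments.
Set Strict Implicit.

Theorem theorem5p2 (V : finType) (e : rel V) (r : V)
  (e_sym : ssrbool.symmetric e) (e_irr : irreflexive e) (g h m : nat) (m_ge2 : (2 <= m)%N)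
  (n : nat) :
  ((((m - 2)`!)%:R : rat)^-1) *: chrom (Kgh_rel e r g m h) n =
    \sum_(1 <= z < m) ((z%:R : rat) *:
        (mesym n rat (m - 1 - z) * chrom (tail_rel e r (g + h + z)) n))
  - ((m - 2)%:R : rat) *:
    \sum_(1 <= z < m) ((((z - 1)`!)%:R : rat)^-1 *:
        (chrom (lollipop_rel z h) n * chrom (tail_rel e r (m - 1 - z + g)) n)).
Proof.
move: m_ge2; case: m => [|[|k]] // _.
have -> : (k.+2 - 2 = k)%N by lia.
set f : 'I_n -> {mpoly rat[n]} := Dn h one.
have HL : forall c, Dn g (Fk f k) c =
   \sum_(i < k.+1) ((i.+1)%:R * ee (k - i)) * Dn g (Dn i.+1 f) c
   - k%:R * \sum_(i < k.+1) phi f i * Dn g (Dn (k - i) one) c.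
  apply: (@Dn_lin n g (Fk f k) k.+1 (fun i : 'I_k.+1 => (i.+1)%:R * ee (k - i))
      (fun i : 'I_k.+1 => Dn i.+1 f) k%:R k.+1 (fun i : 'I_k.+1 => phi f i)
      (fun i : 'I_k.+1 => Dn (k - i) one)) => a; exact: core.
have HA : \sum_(1 <= z < k.+2) ((z%:R : rat) *:
        (mesym n rat (k.+2 - 1 - z) * chrom (tail_rel e r (g + h + z)) n))
   = \sum_(κ | Defs.proper e κ) wt κ *
       \sum_(i < k.+1) (i.+1)%:R * ee (k - i) * Dn (g + h + i.+1) one (κ r).
  rewrite big_add1 /= big_mkord.
  under [RHS]eq_bigr do rewrite mulr_sumr.
  rewrite exchange_big; apply: eq_bigr => i _.
  rewrite chrom_tail mesym_eps scaler_nat -[LHS]mulr_natl [LHS]mulrA [LHS]mulr_sumr.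
  apply: eq_bigr => κ _.
  have -> : (k.+2 - 1 - i.+1 = k - i)%N by lia.
  rewrite /ee; ring.
have HB : \sum_(1 <= z < k.+2) ((((z - 1)`!)%:R : rat)^-1 *:
        (chrom (lollipop_rel z h) n * chrom (tail_rel e r (k.+2 - 1 - z + g)) n))
   = \sum_(κ | Defs.proper e κ) wt κ *
       \sum_(i < k.+1) phi f i * Dn (k - i + g) one (κ r).
  rewrite big_add1 /= big_mkord.
  under [RHS]eq_bigr do rewrite mulr_sumr.
  rewrite exchange_big; apply: eq_bigr => i _.
  rewrite chrom_lollipop subn1 /= mulrnAl inv_fact_scale chrom_tail mulr_sumr.
  apply: eq_bigr => κ _.
  have -> : (k.+2 - 1 - i.+1 + g = k - i + g)%N by lia.
  rewrite /f; ring.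
rewrite HA HB chrom_Kgh [LHS]scaler_sumr [X in _ = _ - X]scaler_nat -[X in _ = _ - X]mulr_natl [X in _ = _ - X]mulr_sumr -sumrB.
apply: eq_bigr => κ _.
rewrite (@Dn_mulrn n g (Fk f k) k`! (κ r)) scalerAr inv_fact_scale HL.
have E1 : \sum_(i < k.+1) (i.+1)%:R * ee (k - i) * Dn g (Dn i.+1 f) (κ r)
   = \sum_(i < k.+1) (i.+1)%:R * ee (k - i) * Dn (g + h + i.+1) one (κ r).
  apply: eq_bigr => i _; rewrite /f !DnD.
  by have -> : (g + i.+1 + h = g + h + i.+1)%N by lia.
have E2 : \sum_(i < k.+1) phi f i * Dn g (Dn (k - i) one) (κ r)
   = \sum_(i < k.+1) phi f i * Dn (k - i + g) one (κ r).
  apply: eq_bigr => i _; rewrite DnD.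
  by have -> : (g + (k - i) = k - i + g)%N by lia.
rewrite E1 E2; ring.
Qed.
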